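(* Let $K\subset\mathbb{R}^m$ be a pointed, closed, convex cone with nonempty interior, let $C\subset\mathbb{R}^m$ be a compact set with $0\notin C$ and $K^*=\operatorname{cone}(\operatorname{conv}(C))$, and let $F:\mathbb{R}^n\to\mathbb{R}^m$ be continuously differentiable with Jacobian $JF$. Define $h(x,d)=\sup\{\langle JF(x)d,w\rangle : w\in C\}$ and $v(x)=\arg\min_{d\in\mathbb{R}^n}\{h(x,d)+\tfrac12\|d\|^2\}$. Fix $\mu>2$. Let $\{x^k\}$ and $\{d^k\}$ be generated by the following scheme with arbitrary positive stepsizes $\alpha_k$: $x^0\in\mathbb{R}^n$ arbitrary; at iteration $k$, if $v(x^k)=0$ stop; otherwise set $d^0=v(x^0)$ and, for $k\ge1$, $d^k=v(x^k)+\beta_k d^{k-1}$, where $$\beta_k=\frac{-h(x^k,v(x^k))\big(|h(x^{k-1},v(x^k))|+h(x^{k-1},v(x^k))\big)}{\max\big\{\mu\,|h(x^k,d^{k-1})\,h(x^{k-1},v(x^k))|,\ -\mu\, h(x^{k-1},v(x^{k-1}))\,|h(x^{k-1},v(x^k))|\big\}},$$ and then $x^{k+1}=x^k+\alpha_k d^k$. Then for every $k\ge0$, $$h(x^k,d^k)\le\Big(1-\frac{2}{\mu}\Big)h(x^k,v(x^k)),$$ i.e. $d^k$ satisfies the sufficient descent condition $h(x^k,d^k)\le c\,h(x^k,v(x^k))$ with $c=1-\frac{2}{\mu}$.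
   Context: $K^*=\{w\in\mathbb{R}^m:\langle y,w\rangle\ge0\ \forall y\in K\}$ is the positive polar cone of $K$. The map $h$ is well defined since $C$ is compact, and $v(x)$ is the unique minimizer of the strongly convex function $d\mapsto h(x,d)+\frac12\|d\|^2$. A vector $d$ is a $K$-descent direction at $x$ iff $h(x,d)<0$, and $v(x)=0$ iff $x$ is a $K$-Pareto critical point, i.e. $\operatorname{Im}(JF(x))\cap(-\operatorname{int}K)=\emptyset$. *)

(* Defs.v *)
From HB Require Import structures.
From mathcomp Require Import all_boot all_order all_algebra.
From mathcomp Require Import all_classical all_reals all_analysis.
Set Implicit Arguments. Unset Strict Implicit. Unset Printing Implicit Defensive.
Import Order.TTheory GRing.Theory Num.Theory.
Import numFieldNormedType.Exports.
Local Open Scope classical_set_scope.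
Local Open Scope ring_scope.

Section Defs.
Variable R : realType.

Definition dotp k (u w : 'rV[R]_k) : R := \sum_(i < k) u 0 i * w 0 i.
Definition sqnorm k (d : 'rV[R]_k) : R := dotp d d.

Definition conv_hull k (S : set 'rV[R]_k) : set 'rV[R]_k :=
  [set y | exists (p : nat) (lam : 'I_p -> R) (z : 'I_p -> 'rV[R]_k),
     (forall i, 0 <= lam i) /\ \sum_(i < p) lam i = 1 /\
     (forall i, S (z i)) /\ y = \sum_(i < p) lam i *: z i].

Definition cone_hull k (S : set 'rV[R]_k) : set 'rV[R]_k :=
  [set y | exists (p : nat) (t : 'I_p -> R) (z : 'I_p -> 'rV[R]_k),
     (forall i, 0 <= t i) /\ (forall i, S (z i)) /\ y = \sum_(i < p) t i *: z i].

Definition polar_cone k (K : set 'rV[R]_k) : set 'rV[R]_k :=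
  [set w | forall y, K y -> 0 <= dotp y w].

Definition is_cone k (K : set 'rV[R]_k) : Prop :=
  forall (t : R) y, 0 <= t -> K y -> K (t *: y).
Definition is_convex_set k (K : set 'rV[R]_k) : Prop :=
  forall (a : R) y z, 0 <= a <= 1 -> K y -> K z -> K (a *: y + (1 - a) *: z).
Definition is_pointed k (K : set 'rV[R]_k) : Prop :=
  forall y, K y -> K (- y) -> y = 0.

Definition C1 n m (F : 'rV[R]_n -> 'rV[R]_m) : Prop :=
  (forall x, differentiable F x) /\ continuous (jacobian F).

(* JF(x) d : the Jacobian of F at x applied to d (= differential of F at x) *)
Definition JF n m (F : 'rV[R]_n -> 'rV[R]_m) (x d : 'rV[R]_n) : 'rV[R]_m :=
  'd F x d.

Definition hfun n m (F : 'rV[R]_n -> 'rV[R]_m) (C : set 'rV[R]_m)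
  (x d : 'rV[R]_n) : R := sup [set dotp (JF F x d) w | w in C].

Definition vobj n m (F : 'rV[R]_n -> 'rV[R]_m) (C : set 'rV[R]_m)
  (x d : 'rV[R]_n) : R := hfun F C x d + sqnorm d / 2.

Definition beta_coef n m (F : 'rV[R]_n -> 'rV[R]_m) (C : set 'rV[R]_m)
  (mu : R) (xprev xk vprev vk dprev : 'rV[R]_n) : R :=
  (- hfun F C xk vk * (`|hfun F C xprev vk| + hfun F C xprev vk)) /
  Num.max (mu * `|hfun F C xk dprev * hfun F C xprev vk|)
          (- mu * hfun F C xprev vprev * `|hfun F C xprev vk|).

End Defs.

(* Main.v *)
Require Import Defs.
From HB Require Import structures.
From mathcomp Require Import all_boot all_order all_algebra.
From mathcomp Require Import all_classical all_reals all_analysis.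
From mathcomp Require Import ring lra.
Import Order.TTheory GRing.Theory Num.Theory.
Import numFieldNormedType.Exports.
Local Open Scope classical_set_scope.
Local Open Scope ring_scope.

Section H.
Variable R : realType.

Lemma dotpDZ k (y1 y2 w : 'rV[R]_k) (t : R) :
  dotp (y1 + t *: y2) w = dotp y1 w + t * dotp y2 w.
Proof.
rewrite /dotp mulr_sumr -big_split /=; apply: eq_bigr => i _.
by rewrite !mxE mulrDl mulrA.
Qed.

Lemma dotp0 k (w : 'rV[R]_k) : dotp 0 w = 0.
Proof. by rewrite /dotp big1 // => i _; rewrite mxE mul0r. Qed.

Lemma has_ub_dotp k (C : set 'rV[R]_k) y :
  compact C -> has_ubound [set dotp y w | w in C].
Proof.
move=> cC; case: (compact_bounded cC) => M0 [_ HM].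
have HB : forall w, C w -> `|w| <= M0 + 1 by apply: HM; rewrite ltrDl.
exists (\sum_(i < k) `|y 0 i| * (M0 + 1)).
move=> _ [w Cw <-]; rewrite /dotp; apply: ler_sum => i _.
apply: le_trans (ler_norm _) _; rewrite normrM ler_wpM2l //.
apply: le_trans (HB w Cw); have -> : `|w| = mx_norm w by []. rewrite mx_normrE.
exact: (le_bigmax _ (fun ij : 'I_1 * 'I_k => `|w ij.1 ij.2|) (0, i)).
Qed.

Lemma hfun_sub n m (F : 'rV[R]_n -> 'rV[R]_m) C x (a b : 'rV[R]_n) (t : R) :
  compact C -> 0 <= t ->
  hfun F C x (a + t *: b) <= hfun F C x a + t * hfun F C x b.
Proof.
move=> cC t0; rewrite /hfun.
case: (pselect (exists w, C w)) => [[w0 Cw0]|nC]; last first.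
  have -> : C = set0 by apply/seteqP; split => w // Cw; apply: nC; exists w.
  by rewrite !image_set0 sup0 mulr0 addr0.
apply: ge_sup; first by exists (dotp (JF F x (a + t *: b)) w0), w0.
move=> _ [w Cw <-]; rewrite /JF linearD linearZ /= dotpDZ.
apply: lerD.
  by apply: (ub_le_sup (has_ub_dotp _ _ (JF F x a) cC)); exists w.
by apply: ler_wpM2l => //; apply: (ub_le_sup (has_ub_dotp _ _ (JF F x b) cC)); exists w.
Qed.

Lemma hfun0 n m (F : 'rV[R]_n -> 'rV[R]_m) C x : hfun F C x 0 = 0.
Proof.
rewrite /hfun /JF linear0.
case: (pselect (exists w, C w)) => [[w0 Cw0]|nC]; last first.
  have -> : C = set0 by apply/seteqP; split => w // Cw; apply: nC; exists w.
  by rewrite !image_set0 sup0.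
have -> : [set dotp 0 w | w in C] = [set 0].
  apply/seteqP; split => z.
    by case=> w _ <-; rewrite dotp0.
  by move=> ->; exists w0 => //; rewrite dotp0.
exact: sup1.
Qed.

Lemma alg (mu a b c e : R) : 2 < mu -> a <= 0 ->
  0 <= (- a * (`|b| + b)) / Num.max (mu * `|c * b|) (- mu * e * `|b|) /\
  a + (- a * (`|b| + b)) / Num.max (mu * `|c * b|) (- mu * e * `|b|) * c
    <= (1 - 2 / mu) * a.
Proof.
move=> mu2 a0.
have mu0 : 0 < mu by apply: lt_trans mu2.
set D := Num.max _ _.
have D0 : mu * `|c * b| <= D by rewrite le_max lexx.
have D0' : 0 <= D by apply: le_trans D0; rewrite mulr_ge0 // ltW.
have key : (1 - 2 / mu) * a = a + (- a * 2) / mu by rewrite mulrBl mul1r; ring.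
rewrite key.
have [b0|b0] := lerP b 0.
  rewrite ler0_norm // addNr mulr0 mul0r mul0r addr0 lexx; split => //.
  rewrite lerDl; apply: divr_ge0; last exact: ltW.
  by rewrite mulr_ge0 // oppr_ge0.
rewrite gtr0_norm //.
have N0 : 0 <= - a * (b + b) by rewrite mulr_ge0 // ?oppr_ge0 // addr_ge0 // ltW.
have beta0 : 0 <= - a * (b + b) / D by rewrite divr_ge0.
split => //; rewrite lerD2l.
have [c0|c0] := lerP c 0.
  apply: (@le_trans _ _ 0); first by rewrite mulr_ge0_le0.
  apply: divr_ge0; last exact: ltW.
  by rewrite mulr_ge0 // oppr_ge0.
have Dp : 0 < D by apply: lt_le_trans D0; rewrite mulr_gt0 // normr_gt0 mulf_neq0 // ?gt_eqF.
rewrite ler_pdivlMr //.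
rewrite gtr0_norm ?mulr_gt0 // in D0.
have : - a * (b + b) / D * (mu * (c * b)) <= - a * (b + b) / D * D by rewrite ler_wpM2l.
rewrite divfK ?gt_eqF //.
move=> H; rewrite -(ler_pM2r b0).
have -> : - a * (b + b) / D * c * mu * b = - a * (b + b) / D * (mu * (c * b)) by ring.
by apply: le_trans H _; rewrite le_eqVlt; apply/orP; left; apply/eqP; ring.
Qed.
End H.

Theorem mainTheorem1 (R : realType) (n m : nat)
  (K C : set 'rV[R]_m) (F : 'rV[R]_n -> 'rV[R]_m)
  (v : 'rV[R]_n -> 'rV[R]_n) (mu : R)
  (alpha : nat -> R) (x d : nat -> 'rV[R]_n) :
  is_pointed K -> closed K -> is_convex_set K -> is_cone K ->
  interior K !=set0 ->
  compact C -> ~ C 0 ->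
  polar_cone K = cone_hull (conv_hull C) ->
  C1 F ->
  (* v(x) is the minimizer of d |-> h(x,d) + ||d||^2/2 (unique) *)
  (forall y e, vobj F C y (v y) <= vobj F C y e) ->
  2 < mu ->
  (forall k, 0 < alpha k) ->
  (* the scheme, run as long as it has not stopped (v(x^j) <> 0 for j <= k) *)
  d 0%N = v (x 0%N) ->
  (forall k, (forall j, (j <= k)%N -> v (x j) != 0) ->
     x k.+1 = x k + alpha k *: d k) ->
  (forall k, (forall j, (j <= k.+1)%N -> v (x j) != 0) ->
     d k.+1 = v (x k.+1) +
       beta_coef F C mu (x k) (x k.+1) (v (x k)) (v (x k.+1)) (d k) *: d k) ->
  forall k, (forall j, (j <= k)%N -> v (x j) != 0) ->
    hfun F C (x k) (d k) <= (1 - 2 / mu) * hfun F C (x k) (v (x k)).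
Proof.
move=> _ _ _ _ _ cC _ _ _ Hmin mu2 _ Hd0 _ Hd k Hk.
have hv0 : forall y, hfun F C y (v y) <= 0.
  move=> y; have := Hmin y 0; rewrite /vobj hfun0.
  have -> : sqnorm (0 : 'rV[R]_n) = 0 by rewrite /sqnorm dotp0.
  rewrite mul0r addr0 => H; apply: le_trans H; rewrite lerDl divr_ge0 //.
  by rewrite /sqnorm /dotp sumr_ge0 // => i _; rewrite -expr2 sqr_ge0.
case: k Hk => [|k] Hk.
  rewrite Hd0; have := alg _ _ _ 0 0 0 mu2 (hv0 (x 0%N)).
  by case=> _; rewrite mulr0 addr0.
rewrite Hd //.
have [b0 H] := alg _ _ _ (hfun F C (x k) (v (x k.+1))) (hfun F C (x k.+1) (d k))
  (hfun F C (x k) (v (x k))) mu2 (hv0 (x k.+1)).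
rewrite /beta_coef.
set bb := hfun F C (x k) (v (x k.+1)) in b0 H *.
set cc := hfun F C (x k.+1) (d k) in b0 H *.
set ee := hfun F C (x k) (v (x k)) in b0 H *.
set aa := hfun F C (x k.+1) (v (x k.+1)) in b0 H *.
set beta := (- aa * _) / _ in b0 H *.
apply: (le_trans (hfun_sub R n m F C (x k.+1) (v (x k.+1)) (d k) beta cC b0)).
exact: H.
Qed.
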